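(* Let $\phi\in[\tfrac{\pi}{2},\pi]$ and $C_\phi=\mathrm{diag}(1,1,1,e^{i\phi})$. Define $$b=\arccos\!\Big(\frac{\frac{1}{\sqrt2}-\cos^2\frac{\phi}{2}}{\sin^2\frac{\phi}{2}}\Big),\quad p=\sqrt{\tfrac12\Big(1+\tfrac{\sqrt2-1}{\tan(\phi/2)}\Big)},\quad q=\sqrt{\tfrac12\Big(1-\tfrac{\sqrt2-1}{\tan(\phi/2)}\Big)}$$ (with $\tfrac{\sqrt2-1}{\tan(\pi/2)}:=0$), and $U_1=\begin{pmatrix} ip & iq\\ -q & p\end{pmatrix}$, $U_2=\begin{pmatrix} ip & -q\\ -iq & -p\end{pmatrix}$. Then $$e^{\frac{\pi}{4}\frac{i}{2}\sigma_z\otimes\sigma_z}=e^{-i\frac{\phi}{2}}\big(e^{i\frac{\phi}{4}\sigma_z}\otimes U_1e^{i\frac{\phi}{4}\sigma_z}\big)\,C_\phi\,\big(e^{i\frac{\phi}{4}\sigma_z}\otimes e^{\frac{i}{2}(b+\pi)\sigma_y}e^{i\frac{\phi}{4}\sigma_z}\big)\,C_\phi\,(I\otimes U_2).$$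
   Context: $\sigma_y,\sigma_z$ are Pauli matrices, $I$ the $2\times2$ identity; the basis is $|00\rangle,|01\rangle,|10\rangle,|11\rangle$ with the first tensor factor being the first qubit and $\sigma_z=\mathrm{diag}(1,-1)$. *)

(* Defs.v *)
From HB Require Import structures.
From mathcomp Require Import all_boot all_order all_algebra.
From mathcomp Require Import all_classical all_reals all_analysis.
From mathcomp Require Import complex mxtens.
Set Implicit Arguments. Unset Strict Implicit. Unset Printing Implicit Defensive.
Import Order.TTheory GRing.Theory Num.Theory numFieldNormedType.Exports.
Local Open Scope ring_scope.
Local Open Scope complex_scope.

Section QDefs.
Variable R : realType.
Local Notation C := R[i].

Definition expm_psum n (A : 'M[C]_n) (N : nat) : 'M[C]_n :=
  \sum_(k < N) ((k`!)%:R)^-1 *: A ^+ k.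

Definition expm n (A : 'M[C]_n) : 'M[C]_n :=
  \matrix_(i, j) (limn (fun N => @complex.Re R (expm_psum A N i j))
               +i* limn (fun N => @complex.Im R (expm_psum A N i j))).

Definition expi (x : R) : C := cos x +i* sin x.

Definition sigma_y : 'M[C]_2 :=
  \matrix_(i, j) (if (i == 0 :> nat) && (j == 1 :> nat) then - 'i
                  else if (i == 1 :> nat) && (j == 0 :> nat) then 'i else 0).
Definition sigma_z : 'M[C]_2 :=
  \matrix_(i, j) (if i == j then (if i == 0 :> nat then 1 else -1) else 0).

(* C_phi = diag(1,1,1,e^{i phi}) in basis |00>,|01>,|10>,|11> *)
Definition Cphi (phi : R) : 'M[C]_4 :=
  \matrix_(i, j) (if i == j then (if i == 3 :> nat then expi phi else 1) else 0).

Definition rphi (phi : R) : R :=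
  if phi == pi then 0 else (Num.sqrt 2 - 1) / tan (phi / 2).

Definition bphi (phi : R) : R :=
  acos (((Num.sqrt 2)^-1 - cos (phi / 2) ^+ 2) / sin (phi / 2) ^+ 2).
Definition pphi (phi : R) : R := Num.sqrt (2^-1 * (1 + rphi phi)).
Definition qphi (phi : R) : R := Num.sqrt (2^-1 * (1 - rphi phi)).

Definition mx2 (a b c d : C) : 'M[C]_2 :=
  \matrix_(i, j) (if i == 0 :> nat then (if j == 0 :> nat then a else b)
                  else (if j == 0 :> nat then c else d)).

Definition U1 (phi : R) : 'M[C]_2 :=
  let p := (pphi phi)%:C in let q := (qphi phi)%:C in
  mx2 ('i * p) ('i * q) (- q) p.
Definition U2 (phi : R) : 'M[C]_2 :=
  let p := (pphi phi)%:C in let q := (qphi phi)%:C in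
  mx2 ('i * p) (- q) (- ('i * q)) (- p).

End QDefs.

(* Main.v *)
Require Import Defs.
From HB Require Import structures.
From mathcomp Require Import all_boot all_order all_algebra.
From mathcomp Require Import all_classical all_reals all_analysis.
From mathcomp Require Import complex mxtens.
From mathcomp Require Import ring lra.
Import Order.TTheory GRing.Theory Num.Theory.
Local Open Scope ring_scope.
Local Open Scope complex_scope.
Module Part1.
Local Open Scope classical_set_scope.
Import numFieldNormedType.Exports.

Lemma cReD (R : realType) (x y : R[i]) : complex.Re (x + y) = complex.Re x + complex.Re y.
Proof. by case: x; case: y. Qed.
Lemma cImD (R : realType) (x y : R[i]) : complex.Im (x + y) = complex.Im x + complex.Im y.
Proof. by case: x; case: y. Qed.
Lemma cRe_sum (R : realType) N (F : 'I_N -> R[i]) :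
  complex.Re (\sum_(k < N) F k) = \sum_(k < N) complex.Re (F k).
Proof. exact: (big_morph _ (@cReD R) (erefl _)). Qed.
Lemma cIm_sum (R : realType) N (F : 'I_N -> R[i]) :
  complex.Im (\sum_(k < N) F k) = \sum_(k < N) complex.Im (F k).
Proof. exact: (big_morph _ (@cImD R) (erefl _)). Qed.
Lemma cReMr (R : realType) (x : R) (w : R[i]) : complex.Re (x%:C * w) = x * complex.Re w.
Proof. by case: w => a b /=; ring. Qed.
Lemma cImMr (R : realType) (x : R) (w : R[i]) : complex.Im (x%:C * w) = x * complex.Im w.
Proof. by case: w => a b /=; ring. Qed.

Lemma expm_eq (R : realType) n (A M : 'M[R[i]]_n) :
  (forall i j, (fun N => \sum_(k < N) (k`!%:R)^-1 * complex.Re ((A ^+ k) i j)) @ \oo --> complex.Re (M i j)) ->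
  (forall i j, (fun N => \sum_(k < N) (k`!%:R)^-1 * complex.Im ((A ^+ k) i j)) @ \oo --> complex.Im (M i j)) ->
  expm A = M.
Proof.
move=> h1 h2; apply/matrixP => i j; rewrite mxE.
have e : forall k, ((k`!)%:R : R[i])^-1 = ((k`!%:R : R)^-1)%:C.
  by move=> k; rewrite fmorphV rmorph_nat.
have E1 : (fun N => complex.Re (expm_psum A N i j)) =
          (fun N => \sum_(k < N) (k`!%:R)^-1 * complex.Re ((A ^+ k) i j)).
  apply/funext => N; rewrite /expm_psum summxE cRe_sum; apply: eq_bigr => k _.
  by rewrite mxE e cReMr.
have E2 : (fun N => complex.Im (expm_psum A N i j)) =
          (fun N => \sum_(k < N) (k`!%:R)^-1 * complex.Im ((A ^+ k) i j)).
  apply/funext => N; rewrite /expm_psum summxE cIm_sum; apply: eq_bigr => k _.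
  by rewrite mxE e cImMr.
rewrite E1 E2 (cvg_lim _ (h1 i j)) // (cvg_lim _ (h2 i j)) //.
by case: (M i j).
Qed.

Lemma cvg_cos (R : realType) (x : R) : series (cos_coeff x) @ \oo --> cos x.
Proof. rewrite unlock; exact: is_cvg_series_cos_coeff. Qed.
Lemma cvg_sin (R : realType) (x : R) : series (sin_coeff x) @ \oo --> sin x.
Proof. rewrite unlock; exact: is_cvg_series_sin_coeff. Qed.

Definition cosc (R : realType) (k : nat) : R := (~~ odd k)%:R * (-1) ^+ k./2.
Definition sinc (R : realType) (k : nat) : R := (odd k)%:R * (-1) ^+ k.-1./2.

Lemma ipow (R : realType) k :
  complex.Re ('i ^+ k : R[i]) = cosc R k /\ complex.Im ('i ^+ k : R[i]) = sinc R k.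
Proof.
elim: k => [|k [IH1 IH2]]; first by rewrite expr0 /cosc /sinc /=; split; ring.
rewrite exprS; split.
  rewrite mulrC ReiNIm IH2 /cosc /sinc.
  case: k {IH1 IH2} => [|k] /=; first by ring.
  rewrite negbK exprS; ring.
rewrite mulrC ImiRe IH1 /cosc /sinc /=. done.
Qed.

Lemma cos_coeffE' (R : realType) (x : R) k :
  cos_coeff x k = (k`!%:R)^-1 * (cosc R k * x ^+ k).
Proof. rewrite /cos_coeff /cosc /= -exprnP; ring. Qed.
Lemma sin_coeffE' (R : realType) (x : R) k :
  sin_coeff x k = (k`!%:R)^-1 * (sinc R k * x ^+ k).
Proof. rewrite /sin_coeff /sinc /=; ring. Qed.

Lemma Re_ix (R : realType) (x : R) k :
  complex.Re (('i * x%:C) ^+ k) = cosc R k * x ^+ k.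
Proof.
have e : (x%:C : R[i]) ^+ k = (x ^+ k)%:C by rewrite rmorphXn.
by rewrite exprMn e mulrC cReMr (ipow R k).1 mulrC. Qed.
Lemma Im_ix (R : realType) (x : R) k :
  complex.Im (('i * x%:C) ^+ k) = sinc R k * x ^+ k.
Proof.
have e : (x%:C : R[i]) ^+ k = (x ^+ k)%:C by rewrite rmorphXn.
by rewrite exprMn e mulrC cImMr (ipow R k).2 mulrC. Qed.

Lemma cvg_cos' (R : realType) (x : R) :
  (fun N => \sum_(k < N) (k`!%:R)^-1 * (cosc R k * x ^+ k)) @ \oo --> cos x.
Proof.
rewrite (_ : (fun N => _) = series (cos_coeff x)); first exact: cvg_cos.
apply/funext => N; rewrite /series /= big_mkord; apply: eq_bigr => k _.
by rewrite cos_coeffE'. Qed.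
Lemma cvg_sin' (R : realType) (x : R) :
  (fun N => \sum_(k < N) (k`!%:R)^-1 * (sinc R k * x ^+ k)) @ \oo --> sin x.
Proof.
rewrite (_ : (fun N => _) = series (sin_coeff x)); first exact: cvg_sin.
apply/funext => N; rewrite /series /= big_mkord; apply: eq_bigr => k _.
by rewrite sin_coeffE'. Qed.

Lemma cvg_zero (R : realType) (f : nat -> R) :
  (forall k, f k = 0) -> (fun N => \sum_(k < N) (k`!%:R)^-1 * f k) @ \oo --> (0:R).
Proof.
move=> h; rewrite (_ : (fun N => _) = (fun _ => 0)); first exact: cvg_cst.
by apply/funext => N; rewrite big1 // => k _; rewrite h mulr0. Qed.

Lemma diag_pow (R : realType) n (d : 'I_n -> R[i]) k :
  (\matrix_(i, j) (if i == j then d i else 0)) ^+ k =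
  \matrix_(i, j) (if i == j then d i ^+ k else 0).
Proof.
elim: k => [|k IH].
  by apply/matrixP => i j; rewrite expr0 !mxE; case: eqP => //.
rewrite exprS IH -mulmxE; apply/matrixP => i j; rewrite !mxE.
rewrite (bigD1 i) //= !mxE eqxx big1 ?addr0; last first.
  by move=> l /negPf hl; rewrite !mxE eq_sym hl mul0r.
by case: eqP => [->|]; rewrite ?exprS ?mulr0.
Qed.

Definition expi' (R : realType) (x : R) : R[i] := expi x.

Lemma expm_diag (R : realType) n (d : 'I_n -> R) :
  expm (\matrix_(i, j) (if i == j then 'i * (d i)%:C else 0)) =
  \matrix_(i, j) (if i == j then expi (d i) else 0).
Proof.
apply: expm_eq => i j; rewrite !mxE; case: (eqVneq i j) => [<-|ne].
- rewrite /expi /=.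
  rewrite (_ : (fun N => _) = fun N => \sum_(k < N) (k`!%:R)^-1 * (cosc R k * (d i) ^+ k)); first exact: cvg_cos'.
  by apply/funext => N; apply: eq_bigr => k _; rewrite diag_pow mxE eqxx Re_ix.
- rewrite (_ : (fun N => _) = (fun _ => 0)); first exact: cvg_cst.
  by apply/funext => N; rewrite big1 // => k _; rewrite diag_pow mxE (negPf ne) mulr0.
- rewrite /expi /=.
  rewrite (_ : (fun N => _) = fun N => \sum_(k < N) (k`!%:R)^-1 * (sinc R k * (d i) ^+ k)); first exact: cvg_sin'.
  by apply/funext => N; apply: eq_bigr => k _; rewrite diag_pow mxE eqxx Im_ix.
- rewrite (_ : (fun N => _) = (fun _ => 0)); first exact: cvg_cst.
  by apply/funext => N; rewrite big1 // => k _; rewrite diag_pow mxE (negPf ne) mulr0.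
Qed.

Lemma mx2_mul (R : realType) (a b c d e f g h : R[i]) :
  mx2 a b c d *m mx2 e f g h =
  mx2 (a * e + b * g) (a * f + b * h) (c * e + d * g) (c * f + d * h).
Proof.
apply/matrixP => i j; rewrite !mxE !big_ord_recr big_ord0 /= !mxE /= add0r.
by case: i => [[|[|//]] ?]; case: j => [[|[|//]] ?].
Qed.

Lemma mx2_eq (R : realType) (a b c d a' b' c' d' : R[i]) :
  a = a' -> b = b' -> c = c' -> d = d' -> mx2 a b c d = mx2 a' b' c' d'.
Proof. by move=> -> -> -> ->. Qed.

Lemma cosc_S (R : realType) k : cosc R k.+1 = - sinc R k.
Proof. rewrite /cosc /sinc; case: k => [|k] /=; first by ring. rewrite negbK exprS; ring. Qed.
Lemma sinc_S (R : realType) k : sinc R k.+1 = cosc R k.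
Proof. by []. Qed.

Lemma rot_pow (R : realType) (x : R) k :
  (mx2 0 x%:C (- x%:C) 0) ^+ k =
  mx2 (cosc R k * x ^+ k)%:C (sinc R k * x ^+ k)%:C
      (- (sinc R k * x ^+ k))%:C (cosc R k * x ^+ k)%:C.
Proof.
elim: k => [|k IH].
  rewrite expr0 /cosc /sinc /= !mul0r !mul1r oppr0.
  by apply/matrixP => i j; rewrite !mxE; case: i => [[|[|//]] ?]; case: j => [[|[|//]] ?].
rewrite exprS IH -mulmxE mx2_mul cosc_S sinc_S exprS.
by apply: mx2_eq; apply/eqP; rewrite eq_complex /=; apply/andP; split; apply/eqP; ring.
Qed.

Lemma expm_rot (R : realType) (x : R) :
  expm (mx2 0 x%:C (- x%:C) 0) =
  mx2 (cos x)%:C (sin x)%:C (- sin x)%:C (cos x)%:C.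
Proof.
apply: expm_eq => i j;
  case: i => [[|[|//]] ?]; case: j => [[|[|//]] ?]; rewrite !mxE /=.
- rewrite (_ : (fun N => _) = fun N => \sum_(k < N) (k`!%:R)^-1 * (cosc R k * x ^+ k)); first exact: cvg_cos'.
  by apply/funext => N; apply: eq_bigr => k _; rewrite rot_pow !mxE.
- rewrite (_ : (fun N => _) = fun N => \sum_(k < N) (k`!%:R)^-1 * (sinc R k * x ^+ k)); first exact: cvg_sin'.
  by apply/funext => N; apply: eq_bigr => k _; rewrite rot_pow !mxE.
- rewrite (_ : (fun N => _) = - (fun N => \sum_(k < N) (k`!%:R)^-1 * (sinc R k * x ^+ k))); first by apply: cvgN; exact: cvg_sin'.
  by apply/funext => N; rewrite -[RHS]/(- (\sum_(k < N) (k`!%:R)^-1 * (sinc R k * x ^+ k))) -sumrN; apply: eq_bigr => k _; rewrite rot_pow !mxE /= mulrN.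
- rewrite (_ : (fun N => _) = fun N => \sum_(k < N) (k`!%:R)^-1 * (cosc R k * x ^+ k)); first exact: cvg_cos'.
  by apply/funext => N; apply: eq_bigr => k _; rewrite rot_pow !mxE.
all: rewrite (_ : (fun N => _) = (fun _ => 0)); first exact: cvg_cst.
all: by apply/funext => N; rewrite big1 // => k _; rewrite rot_pow !mxE /= ?oppr0 mulr0.
Qed.

End Part1.
Import Part1.
Module Part2.
Local Open Scope classical_set_scope.
Import numFieldNormedType.Exports.
Set Implicit Arguments. Unset Strict Implicit. Unset Printing Implicit Defensive.

Definition P0 (R : realType) : 'M[R[i]]_2 := mx2 1 0 0 0.
Definition P1 (R : realType) : 'M[R[i]]_2 := mx2 0 0 0 1.
Definition Bd (R : realType) (A0 A1 : 'M[R[i]]_2) : 'M[R[i]]_(2 * 2) :=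
  P0 R *t A0 + P1 R *t A1.

Lemma mx2_0 (R : realType) : mx2 0 0 0 0 = 0 :> 'M[R[i]]_2.
Proof. by apply/matrixP => i j; rewrite !mxE; case: ifP; case: ifP. Qed.

Lemma Bd_mul (R : realType) (A0 A1 B0 B1 : 'M[R[i]]_2) :
  Bd A0 A1 *m Bd B0 B1 = Bd (A0 *m B0) (A1 *m B1).
Proof.
rewrite /Bd mulmxDl !mulmxDr !tensmx_mul /P0 /P1 !mx2_mul.
rewrite !(mul0r, mulr0, mul1r, addr0) mx2_0 !tens0mx addr0 add0r. by rewrite add0r.
Qed.

Lemma tensZr (R : realType) (c : R[i]) (A B : 'M[R[i]]_2) :
  c *: (A *t B) = A *t (c *: B).
Proof. by apply/matrixP => i j; rewrite !mxE mulrCA. Qed.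

Lemma Bd_scale (R : realType) (c : R[i]) (A0 A1 : 'M[R[i]]_2) :
  c *: Bd A0 A1 = Bd (c *: A0) (c *: A1).
Proof. by rewrite /Bd scalerDr !tensZr. Qed.

Lemma Bd_eq (R : realType) (A0 A1 B0 B1 : 'M[R[i]]_2) :
  A0 = B0 -> A1 = B1 -> Bd A0 A1 = Bd B0 B1.
Proof. by move=> -> ->. Qed.

Lemma tens_diag (R : realType) (d0 d1 : R[i]) (M : 'M[R[i]]_2) :
  mx2 d0 0 0 d1 *t M = Bd (d0 *: M) (d1 *: M).
Proof.
apply/matrixP => i j.
case: (mxtens_indexP i) => i1 i2; case: (mxtens_indexP j) => j1 j2.
rewrite ?tensmxE /Bd [in RHS]mxE !tensmxE !mxE.
by case: i1 => [[|[|//]] ?]; case: j1 => [[|[|//]] ?] /=; ring.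
Qed.

Lemma tens_id (R : realType) (M : 'M[R[i]]_2) :
  (1%:M : 'M[R[i]]_2) *t M = Bd M M.
Proof.
have -> : (1%:M : 'M[R[i]]_2) = mx2 1 0 0 1.
  by apply/matrixP => i j; rewrite !mxE; case: i => [[|[|//]] ?]; case: j => [[|[|//]] ?].
by rewrite tens_diag !scale1r.
Qed.

Lemma Cphi_Bd (R : realType) (phi : R) :
  Cphi phi = Bd (mx2 1 0 0 1) (mx2 1 0 0 (expi phi)).
Proof.
apply/matrixP => i j.
case: (@mxtens_indexP 2 2 i) => i1 i2; case: (@mxtens_indexP 2 2 j) => j1 j2.
rewrite ?tensmxE /Bd [in RHS]mxE !tensmxE !mxE.
case: i1 => [[|[|//]] ?]; case: j1 => [[|[|//]] ?];
case: i2 => [[|[|//]] ?]; case: j2 => [[|[|//]] ?] /=.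
all: ring.
Qed.

Lemma realC_div (R : realType) (x : R) (n : nat) :
  ((x / n%:R)%:C : R[i]) = x%:C / n%:R.
Proof. by rewrite rmorphM fmorphV rmorph_nat. Qed.

Lemma pi8 (R : realType) (x : R) :
  (x / 4)%:C * ('i / 2) = 'i * (x / 8)%:C :> R[i].
Proof.
by rewrite (realC_div x 4) (realC_div x 8); field.
Qed.

Definition dL (R : realType) (k : 'I_(2 * 2)) : R :=
  if (mxtens_unindex k).1 == (mxtens_unindex k).2 then pi / 8 else - (pi / 8).

Lemma LHS_diag (R : realType) :
  ((pi / 4)%:C * ('i / 2) *: (sigma_z R *t sigma_z R) : 'M[R[i]]_(2 * 2)) =
  \matrix_(i, j) (if i == j then 'i * (dL R i)%:C else 0).
Proof.
apply/matrixP => i j.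
case: (mxtens_indexP i) => i1 i2; case: (mxtens_indexP j) => j1 j2.
rewrite [in LHS]mxE tensmxE !mxE /dL !mxtens_indexK (inj_eq (can_inj (@mxtens_indexK 2 2))) /=.
case: i1 => [[|[|//]] ?]; case: j1 => [[|[|//]] ?];
case: i2 => [[|[|//]] ?]; case: j2 => [[|[|//]] ?] /=.
all: by rewrite ?realC_div; field.
Qed.

Lemma expm_LHS (R : realType) :
  expm ((pi / 4)%:C * ('i / 2) *: (sigma_z R *t sigma_z R) : 'M[R[i]]_4) =
  Bd (mx2 (expi (pi / 8)) 0 0 (expi (- (pi / 8))))
     (mx2 (expi (- (pi / 8))) 0 0 (expi (pi / 8))).
Proof.
rewrite LHS_diag expm_diag.
apply/matrixP => i j.
case: (@mxtens_indexP 2 2 i) => i1 i2; case: (@mxtens_indexP 2 2 j) => j1 j2.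
rewrite [in LHS]mxE /Bd [in RHS]mxE !tensmxE !mxE /dL !mxtens_indexK (inj_eq (can_inj (@mxtens_indexK 2 2))) /=.
case: i1 => [[|[|//]] ?]; case: j1 => [[|[|//]] ?];
case: i2 => [[|[|//]] ?]; case: j2 => [[|[|//]] ?] /=; ring.
Qed.

Lemma expm_Z (R : realType) (x : R) :
  expm (('i * x%:C) *: sigma_z R) = mx2 (expi x) 0 0 (expi (- x)).
Proof.
have -> : ('i * x%:C) *: sigma_z R =
   \matrix_(i, j) (if i == j then 'i * (if i == 0 :> nat then x else - x)%:C else 0).
  apply/matrixP => i j; rewrite !mxE.
  by case: i => [[|[|//]] ?]; case: j => [[|[|//]] ?] /=; rewrite ?rmorphN; ring.
rewrite expm_diag; apply/matrixP => i j; rewrite !mxE.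
by case: i => [[|[|//]] ?]; case: j => [[|[|//]] ?].
Qed.

Lemma expm_Y (R : realType) (x : R) :
  expm (('i / 2 * x%:C) *: sigma_y R) =
  mx2 (cos (x / 2))%:C (sin (x / 2))%:C (- sin (x / 2))%:C (cos (x / 2))%:C.
Proof.
have -> : ('i / 2 * x%:C) *: sigma_y R = mx2 0 (x / 2)%:C (- (x / 2)%:C) 0.
  have ii : ('i * 'i : R[i]) = -1 by rewrite -expr2 sqr_i.
  apply/matrixP => i j; rewrite !mxE.
  case: i => [[|[|//]] ?]; case: j => [[|[|//]] ?] /=; rewrite ?mulr0 // (realC_div x 2).
    by transitivity (- ('i * 'i) * (x%:C / 2)); [ring | rewrite ii opprK mul1r].
  by apply/eqP; rewrite eq_complex /=; apply/andP; split; apply/eqP; field.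
by rewrite expm_rot.
Qed.

Lemma block_id (R : realType) (p q al be c s C8 S8 : R) :
  2 * p * q * al * c + (p ^+ 2 - q ^+ 2) * be = 0 ->
  - al * s * (p ^+ 2 + q ^+ 2) = S8 ->
  - al * (p ^+ 2 - q ^+ 2) * c + 2 * p * q * be = C8 ->
  mx2 ('i * p%:C) ('i * q%:C) (- q%:C) p%:C
   *m mx2 ((c +i* s) * al%:C) be%:C (- be%:C) ((c +i* - s) * al%:C)
   *m mx2 ('i * p%:C) (- q%:C) (- ('i * q%:C)) (- p%:C)
  = mx2 (C8 +i* S8) 0 0 (C8 +i* - S8).
Proof.
move=> H1 H2 H3; rewrite !mx2_mul; apply: mx2_eq; apply/eqP; rewrite eq_complex /=;
  apply/andP; split; apply/eqP; lra.
Qed.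

Lemma expiD (R : realType) (x y : R) : expi x * expi y = expi (x + y).
Proof.
rewrite /expi; apply/eqP; rewrite eq_complex /= cosD sinD.
by apply/andP; split; apply/eqP; ring.
Qed.

Lemma scale_mx2 (R : realType) (k a b c d : R[i]) :
  k *: mx2 a b c d = mx2 (k * a) (k * b) (k * c) (k * d).
Proof.
by apply/matrixP => i j; rewrite !mxE; case: i => [[|[|//]] ?]; case: j => [[|[|//]] ?].
Qed.

Lemma regroup (R : realType) (e a : R[i]) (U V W D Z : 'M[R[i]]_2) :
  e *: ((a *: (U *m Z)) *m D *m (a *: (V *m Z)) *m D *m W) =
  U *m ((e * a * a) *: (Z *m D *m V *m Z *m D)) *m W.
Proof.
by do ![rewrite -scalemxAl | rewrite -scalemxAr]; rewrite !scalerA !mulmxA.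
Qed.

Lemma middle0 (R : realType) (Z Zb : R[i]) (al be : R) :
  Z * Zb = 1 ->
  (Zb * Zb * Z * Z) *: (mx2 Z 0 0 Zb *m mx2 1 0 0 1
      *m mx2 al%:C be%:C (- be)%:C al%:C *m mx2 Z 0 0 Zb *m mx2 1 0 0 1) =
  mx2 (Z * Z * al%:C) be%:C (- be%:C) (Zb * Zb * al%:C).
Proof.
move=> hZ; have Z0 : Z != 0 by apply/eqP => Z0; move: hZ; rewrite Z0 mul0r => /eqP; rewrite eq_sym oner_eq0.
have -> : Zb = Z^-1 by apply: (mulfI Z0); rewrite hZ mulfV.
rewrite !mx2_mul scale_mx2 rmorphN; apply: mx2_eq; by field.
Qed.

Lemma middle1 (R : realType) (Z Zb : R[i]) (al be : R) :
  Z * Zb = 1 ->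
  (Zb * Zb * Zb * Zb) *: (mx2 Z 0 0 Zb *m mx2 1 0 0 (Z * Z * Z * Z)
      *m mx2 al%:C be%:C (- be)%:C al%:C *m mx2 Z 0 0 Zb *m mx2 1 0 0 (Z * Z * Z * Z)) =
  mx2 (Zb * Zb * al%:C) be%:C (- be%:C) (Z * Z * al%:C).
Proof.
move=> hZ; have Z0 : Z != 0 by apply/eqP => Z0; move: hZ; rewrite Z0 mul0r => /eqP; rewrite eq_sym oner_eq0.
have -> : Zb = Z^-1 by apply: (mulfI Z0); rewrite hZ mulfV.
rewrite !mx2_mul scale_mx2 rmorphN; apply: mx2_eq; by field.
Qed.

End Part2.
Import Part2.
Module Part3.
Set Implicit Arguments. Unset Strict Implicit.

Lemma sq_inj (R : realType) (x y : R) : 0 <= x -> 0 <= y -> x ^+ 2 = y ^+ 2 -> x = y.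
Proof. by move=> x0 y0 /eqP; rewrite eqrXn2 // => /eqP. Qed.

Lemma div_lb (R : realFieldType) (x y a t : R) : 0 < t -> x * t = y -> a * t <= y -> a <= x.
Proof. move=> t0 e h. rewrite -(ler_pM2r t0) e //. Qed.
Lemma div_ub (R : realFieldType) (x y a t : R) : 0 < t -> x * t = y -> y <= a * t -> x <= a.
Proof. move=> t0 e h. rewrite -(ler_pM2r t0) e //. Qed.

Lemma key (R : realType) (h c s A Bc cb p q r C8 S8 : R) :
 h ^+ 2 = 2 -> 0 < h -> c ^+ 2 + s ^+ 2 = 1 -> 0 < s -> 0 <= c ->
 r * s = (h - 1) * c -> cb * s ^+ 2 = h / 2 - c ^+ 2 ->
 A ^+ 2 = (1 - cb) / 2 -> Bc ^+ 2 = (1 + cb) / 2 -> 0 <= A -> 0 <= Bc ->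
 p ^+ 2 = (1 + r) / 2 -> q ^+ 2 = (1 - r) / 2 -> 0 <= p -> 0 <= q ->
 C8 ^+ 2 = (2 + h) / 4 -> S8 ^+ 2 = (2 - h) / 4 -> 0 <= C8 -> 0 <= S8 ->
 [/\ 2 * p * q * A * c = r * Bc, A * s = S8 & A * r * c + 2 * p * q * Bc = C8].
Proof.
move=> Hh h0 Hcs s0 c0 Hr Hcb HA HB A0 B0 Hp Hq p0 q0 HC HS C0 S0.
have h1 : 1 <= h by nra.
have r0 : 0 <= r by nra.
have s2 : s ^+ 2 = 1 - c ^+ 2 by lra.
have s4 : s ^+ 4 != 0 by rewrite expf_neq0 // gt_eqF.
have F1 : 2 * p * q * A * c = r * Bc.
  apply: sq_inj; first by rewrite !mulr_ge0.
    by rewrite mulr_ge0.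
  rewrite (_ : (2 * p * q * A * c) ^+ 2 = 4 * p ^+ 2 * q ^+ 2 * A ^+ 2 * c ^+ 2); last by ring.
  rewrite exprMn Hp Hq HA HB; apply: (mulIf s4).
  transitivity ((s ^+ 2 - (r * s) ^+ 2) * (s ^+ 2 - cb * s ^+ 2) * c ^+ 2 / 2); first by field.
  transitivity ((r * s) ^+ 2 * (s ^+ 2 + cb * s ^+ 2) / 2); last by field.
  rewrite Hr Hcb s2; apply/eqP; rewrite -subr_eq0; apply/eqP.
  transitivity ((h ^+ 2 - 2) * (h / 2 * (c ^+ 2 - 1) * c ^+ 2 / 2)); first by field.
  by rewrite Hh subrr mul0r.
split => //.
  apply: sq_inj; [by rewrite mulr_ge0 // ltW | by [] |].
  rewrite exprMn HA HS.
  transitivity ((s ^+ 2 - cb * s ^+ 2) / 2); first by field.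
  by rewrite Hcb s2; field.
apply: sq_inj; [by rewrite addr_ge0 // !mulr_ge0 | by [] |].
transitivity (A ^+ 2 * (r ^+ 2 * c ^+ 2) + 2 * r * Bc * (2 * p * q * A * c) + 4 * p ^+ 2 * q ^+ 2 * Bc ^+ 2); first by ring.
rewrite F1.
transitivity (A ^+ 2 * (r ^+ 2 * c ^+ 2) + Bc ^+ 2 * (2 * r ^+ 2 + 4 * p ^+ 2 * q ^+ 2)); first by ring.
rewrite HA HB Hp Hq HC; apply: (mulIf s4).
transitivity (((s ^+ 2 - cb * s ^+ 2) * (r * s) ^+ 2 * c ^+ 2 + (s ^+ 2 + cb * s ^+ 2) * (s ^+ 2 + (r * s) ^+ 2)) / 2); first by field.
transitivity ((2 + h) / 4 * (s ^+ 2) ^+ 2); last by ring.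
rewrite Hr Hcb s2; apply/eqP; rewrite -subr_eq0; apply/eqP.
transitivity ((h ^+ 2 - 2) * (h / 2 * c ^+ 2 * (1 - c ^+ 2) / 2)); first by field.
by rewrite Hh subrr mul0r.
Qed.

End Part3.
Import Part3.
Module Part4.

Lemma cos_half2 (R : realType) (y : R) : cos y = 2 * cos (y / 2) ^+ 2 - 1.
Proof.
have e : y = (y / 2) *+ 2 by rewrite mulr2n; field.
by rewrite {1}e cos_mulr2n mulr2n; ring.
Qed.

Lemma trig_facts (R : realType) (phi : R) :
  pi / 2 <= phi <= pi ->
  let c := cos (phi / 2) in let s := sin (phi / 2) in
  let al := cos ((bphi phi + pi) / 2) in let be := sin ((bphi phi + pi) / 2) in
  let p := pphi phi in let q := qphi phi in
  [/\ 2 * p * q * al * c + (p ^+ 2 - q ^+ 2) * be = 0,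
      - al * s * (p ^+ 2 + q ^+ 2) = sin (pi / 8) &
      - al * (p ^+ 2 - q ^+ 2) * c + 2 * p * q * be = cos (pi / 8)].
Proof.
move=> /andP[hlo hhi] c s al be p q.
have pi0 : 0 < pi := pi_gt0 R.
pose h : R := Num.sqrt 2.
have hh : h ^+ 2 = 2 by rewrite sqr_sqrtr // ler0n.
have h0 : 0 < h by rewrite sqrtr_gt0 ltr0n.
have h2 : h <= 2 by nra.
have h1 : 1 <= h by nra.
have s0 : 0 < s by apply: sin_gt0_pi; apply/andP; split; lra.
have c0 : 0 <= c by apply: cos_ge0_pihalf; apply/andP; split; lra.
have Hcs : c ^+ 2 + s ^+ 2 = 1 by rewrite /c /s cos2Dsin2.
have cphi : cos phi <= 0.
  rewrite (_ : phi = (phi - pi / 2) + pi / 2); last by ring.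
  rewrite cosDpihalf oppr_le0; apply: sin_ge0_pi; apply/andP; split; lra.
have c2 : c ^+ 2 <= 1 / 2 by move: cphi; rewrite cos_half2 -/c; lra.
set r := rphi phi.
have Hr : r * s = (h - 1) * c.
  rewrite /r /rphi; case: eqP => [ephi|_].
    by rewrite /c ephi cos_pihalf; ring.
  rewrite /tan -/c -/s -/h invf_div; field; exact: lt0r_neq0.
have hc0 : 0 <= (h - 1) * c by apply: mulr_ge0; lra.
have r0 : 0 <= r.
  rewrite leNgt; apply/negP => rn.
  have : r * s < 0 by rewrite pmulr_llt0.
  lra.
have cs : c <= s by nra.
have r1 : r <= 1 by nra.
set x := ((Num.sqrt 2)^-1 - cos (phi / 2) ^+ 2) / sin (phi / 2) ^+ 2.
have hinv : (Num.sqrt 2 : R)^-1 = h / 2.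
  rewrite -/h; apply: (mulfI (lt0r_neq0 h0)); rewrite mulfV ?lt0r_neq0 //.
  by rewrite mulrA -expr2 hh; field.
have Hx : x * s ^+ 2 = h / 2 - c ^+ 2.
  by rewrite /x hinv -/c -/s; field; exact: lt0r_neq0.
have s2pos : 0 < s ^+ 2 by exact: exprn_gt0.
have xlo : -1 <= x by apply: (div_lb s2pos Hx); lra.
have xhi : x <= 1 by apply: (div_ub s2pos Hx); lra.
set b := bphi phi.
have Hb : b = acos x by [].
have cb : cos b = x by rewrite Hb acosK // in_itv /=; apply/andP.
have b0 : 0 <= b by rewrite Hb acos_ge0 //; apply/andP.
have bpi : b <= pi by rewrite Hb acos_lepi //; apply/andP.
set A := sin (b / 2); set Bc := cos (b / 2).
have Hal : al = - A by rewrite /al (_ : (b + pi) / 2 = b / 2 + pi / 2) ?cosDpihalf //; field.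
have Hbe : be = Bc by rewrite /be (_ : (b + pi) / 2 = b / 2 + pi / 2) ?sinDpihalf //; field.
have A0 : 0 <= A by apply: sin_ge0_pi; apply/andP; split; lra.
have B0 : 0 <= Bc by apply: cos_ge0_pihalf; apply/andP; split; lra.
have HB : Bc ^+ 2 = (1 + x) / 2 by rewrite -cb cos_half2 -/Bc; field.
have HA : A ^+ 2 = (1 - x) / 2 by rewrite /A sin2cos2 -/Bc HB; field.
have Hp : p ^+ 2 = (1 + r) / 2.
  rewrite /p /pphi -/r sqr_sqrtr; [by rewrite mulrC | apply: mulr_ge0; lra].
have Hq : q ^+ 2 = (1 - r) / 2.
  rewrite /q /qphi -/r sqr_sqrtr; [by rewrite mulrC | apply: mulr_ge0; lra].
have p0 : 0 <= p by rewrite sqrtr_ge0.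
have q0 : 0 <= q by rewrite sqrtr_ge0.
set C8 := cos (pi / 8); set S8 := sin (pi / 8).
have C0 : 0 <= C8 by apply: cos_ge0_pihalf; apply/andP; split; lra.
have S0 : 0 <= S8 by apply: sin_ge0_pi; apply/andP; split; lra.
have c4 : cos (pi / 4) = h / 2.
  apply: sq_inj; [apply: cos_ge0_pihalf; apply/andP; split; lra | lra |].
  have := cos_half2 R (pi / 2); rewrite cos_pihalf (_ : pi / 2 / 2 = pi / 4); last by field.
  have hq : (h / 2) ^+ 2 = 1 / 2 by rewrite expr_div_n hh; field.
  by rewrite hq => e; lra.
have HC : C8 ^+ 2 = (2 + h) / 4.
  have := cos_half2 R (pi / 4); rewrite c4 (_ : pi / 4 / 2 = pi / 8) -/C8; last by field.
  by move=> e; lra.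
have HS : S8 ^+ 2 = (2 - h) / 4 by rewrite /S8 sin2cos2 -/C8 HC; field.
have [F1 F2 F3] := key hh h0 Hcs s0 c0 Hr Hx HA HB A0 B0 Hp Hq p0 q0 HC HS C0 S0.
have Hpq : p ^+ 2 - q ^+ 2 = r by rewrite Hp Hq; field.
have Hpq' : p ^+ 2 + q ^+ 2 = 1 by rewrite Hp Hq; field.
rewrite Hpq Hpq' Hal Hbe; split.
- by rewrite -F1; ring.
- by rewrite -F2; ring.
- by rewrite -F3; ring.
Qed.

End Part4.
Import Part4.

Theorem mainTheorem9 (R : realType) (phi : R) :
  pi / 2 <= phi <= pi ->
  expm ((pi / 4)%:C * ('i / 2) *: (sigma_z R *t sigma_z R) : 'M[R[i]]_4) =
  expi (- (phi / 2)) *: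
    ((expm (('i * (phi / 4)%:C) *: sigma_z R)
      *t (U1 phi *m expm (('i * (phi / 4)%:C) *: sigma_z R))) *m Cphi phi
     *m (expm (('i * (phi / 4)%:C) *: sigma_z R)
         *t (expm (('i / 2 * (bphi phi + pi)%:C) *: sigma_y R)
             *m expm (('i * (phi / 4)%:C) *: sigma_z R)))
     *m Cphi phi
     *m ((1%:M : 'M[R[i]]_2) *t U2 phi)).
Proof.
move=> /andP[hlo hhi].
rewrite expm_LHS !expm_Z expm_Y !tens_diag tens_id Cphi_Bd !Bd_mul Bd_scale.
set Z := expi (phi / 4); set Zb := expi (- (phi / 4)).
have expi0 : expi 0 = 1 :> R[i] by rewrite /expi cos0 sin0.
have hZ : Z * Zb = 1 by rewrite /Z /Zb expiD subrr expi0.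
have E1 : expi (- (phi / 2)) = Zb * Zb by rewrite /Zb expiD; congr expi; field.
have E4 : expi phi = Z * Z * Z * Z by rewrite /Z !expiD; congr expi; field.
have EU : Z * Z = cos (phi / 2) +i* sin (phi / 2) by rewrite /Z expiD; congr expi; field.
have EUb : Zb * Zb = cos (phi / 2) +i* - sin (phi / 2).
  rewrite /Zb expiD (_ : - (phi / 4) + - (phi / 4) = - (phi / 2)); last by field.
  by rewrite /expi cosN sinN.
have hb : pi / 2 <= phi <= pi by rewrite hlo hhi.
have [H1 H2 H3] := trig_facts R phi hb.
apply: Bd_eq.
  rewrite regroup E1 middle0 // EU EUb /U1 /U2 /= (block_id H1 H2 H3).
  by rewrite /expi cosN sinN.
rewrite regroup E1 E4 middle1 // EU EUb /U1 /U2 /=.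
have H2' : - cos ((bphi phi + pi) / 2) * (- sin (phi / 2)) * (pphi phi ^+ 2 + qphi phi ^+ 2) = - sin (pi / 8).
  by rewrite -H2; ring.
have := block_id H1 H2' H3; rewrite !opprK => ->.
by rewrite /expi cosN sinN.
Qed.
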